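(* Let $n\geq1$ and let $\mathcal{M}_n$ be the structure defined below. (i) For every automorphism $\sigma$ of $\mathcal{M}_n$ fixing $P$ pointwise there is a unique additive map $F_\sigma:\mathbb{C}\to\mathbb{C}$ with $\sigma(x)=F_\sigma(\pi(x))\star x$ for all $x\in S$, and $\sigma\mapsto F_\sigma$ is a bijection from $\mathrm{Aut}(\mathcal{M}_n/P)$ onto $D_n$. (ii) Every relation $R_n$ is definable (with the same sorts) in the structure $\mathcal{M}_1'=(S,P,\pi,\star,\oplus,\otimes)$, where $\otimes:S\times S\to S$ is $((\alpha,a'),(\beta,b'))\mapsto(\alpha\beta,\alpha b'+\beta a')$; that is, $\mathcal{M}_n$ is a definitional reduct of $\mathcal{M}_1'$.
   Context: For $n\geq1$, $\mathcal{M}_n$ is the two-sorted structure with sort $P=\mathbb{C}$ carrying the full field structure $(\mathbb{C},+,\cdot)$, sort $S=\mathbb{C}\times\mathbb{C}$, the projection $\pi:S\to P$, $(\alpha,a')\mapsto\alpha$, the addition $\oplus$ on $S$, $((\alpha,a'),(\beta,b'))\mapsto(\alpha+\beta,a'+b')$, the action $\star$ of $P$ on $S$, $\beta\star(\alpha,a')=(\alpha,a'+\beta)$, and the $(n+1)$-ary relation $R_n$ on $S$ given by: $R_n((\alpha_1,a_1'),\ldots,(\alpha_{n+1},a_{n+1}'))$ holds iff $\alpha_i=\alpha_1^i$ for all $i\leq n+1$ and $a_{n+1}'=\sum_{i=1}^{n}\binom{n+1}{i}(-1)^{n-i}\alpha_{n+1-i}a_i'$. $D_n$ is the set of additive $F:\mathbb{C}\to\mathbb{C}$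 with $F(\alpha^{n+1})=\sum_{i=1}^{n}\binom{n+1}{i}(-1)^{n-i}\alpha^{n+1-i}F(\alpha^i)$ for all $\alpha\in\mathbb{C}$. *)

(* Defs.v *)
From mathcomp Require Import all_boot all_algebra.
From mathcomp Require Import complex Rstruct.
Set Implicit Arguments. Unset Strict Implicit. Unset Printing Implicit Defensive.
Import GRing.Theory.
Local Open Scope ring_scope.

Definition C : fieldType := complex Rdefinitions.R.

Definition S : Type := (C * C)%type.

Definition piS (x : S) : C := x.1.
Definition oplusS (x y : S) : S := (x.1 + y.1, x.2 + y.2).
Definition starS (b : C) (x : S) : S := (x.1, x.2 + b).
Definition otimesS (x y : S) : S := (x.1 * y.1, x.1 * y.2 + y.1 * x.2).

(* The (n+1)-ary relation R_n.  A tuple (x_1,...,x_{n+1}) is given as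
   x : 'I_n.+1 -> S, with x_k (1-based) = x (inord k.-1). *)
Definition Rrel (n : nat) (x : 'I_n.+1 -> S) : Prop :=
  let a := fun k : nat => x (inord k.-1) in
  (forall i : 'I_n.+1, (a i.+1).1 = (a 1%N).1 ^+ i.+1) /\
  (a n.+1).2 = \sum_(1 <= i < n.+1)
                 'C(n.+1, i)%:R * (-1) ^+ (n - i) * (a (n.+1 - i)%N).1 * (a i).2.

Definition additiveC (F : C -> C) : Prop := forall a b, F (a + b) = F a + F b.

Definition Dn (n : nat) (F : C -> C) : Prop :=
  additiveC F /\
  forall alpha : C,
    F (alpha ^+ n.+1) = \sum_(1 <= i < n.+1)
       'C(n.+1, i)%:R * (-1) ^+ (n - i) * alpha ^+ (n.+1 - i) * F (alpha ^+ i).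

(* Automorphisms of M_n fixing P pointwise: the P-component is the identity
   (so the field structure on P is trivially preserved) and the S-component
   sigma is a bijection of S preserving pi, (+), the action and R_n. *)
Definition autMnP (n : nat) (sigma : S -> S) : Prop :=
  bijective sigma /\
  (forall x, piS (sigma x) = piS x) /\
  (forall x y, sigma (oplusS x y) = oplusS (sigma x) (sigma y)) /\
  (forall (b : C) x, sigma (starS b x) = starS b (sigma x)) /\
  (forall x : 'I_n.+1 -> S, Rrel x <-> Rrel (fun i => sigma (x i))).

(* Variables are de Bruijn-style indices into two environments (one per sort);
   a quantifier over a sort pushes the new value at index 0 of that sort. *)
Inductive termP : Type :=
  | PVar  : nat -> termP
  | PZero : termP
  | POne  : termP
  | PAdd  : termP -> termP -> termP
  | PMul  : termP -> termP -> termP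
  | PPi   : termS -> termP
with termS : Type :=
  | SVar    : nat -> termS
  | SOplus  : termS -> termS -> termS
  | SStar   : termP -> termS -> termS
  | SOtimes : termS -> termS -> termS.

Inductive formula : Type :=
  | FEqP : termP -> termP -> formula
  | FEqS : termS -> termS -> formula
  | FNot : formula -> formula
  | FAnd : formula -> formula -> formula
  | FOr  : formula -> formula -> formula
  | FImp : formula -> formula -> formula
  | FExP : formula -> formula
  | FAllP : formula -> formula
  | FExS : formula -> formula
  | FAllS : formula -> formula.

Fixpoint evalP (eP : nat -> C) (eS : nat -> S) (t : termP) : C :=
  match t with
  | PVar k => eP k
  | PZero => 0
  | POne => 1
  | PAdd t1 t2 => evalP eP eS t1 + evalP eP eS t2
  | PMul t1 t2 => evalP eP eS t1 * evalP eP eS t2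
  | PPi u => piS (evalS eP eS u)
  end
with evalS (eP : nat -> C) (eS : nat -> S) (u : termS) : S :=
  match u with
  | SVar k => eS k
  | SOplus u1 u2 => oplusS (evalS eP eS u1) (evalS eP eS u2)
  | SStar t u1 => starS (evalP eP eS t) (evalS eP eS u1)
  | SOtimes u1 u2 => otimesS (evalS eP eS u1) (evalS eP eS u2)
  end.

Definition scons {T : Type} (v : T) (e : nat -> T) : nat -> T :=
  fun k => if k is k'.+1 then e k' else v.

Fixpoint sat (eP : nat -> C) (eS : nat -> S) (f : formula) : Prop :=
  match f with
  | FEqP t1 t2 => evalP eP eS t1 = evalP eP eS t2
  | FEqS u1 u2 => evalS eP eS u1 = evalS eP eS u2
  | FNot g => ~ sat eP eS g
  | FAnd g h => sat eP eS g /\ sat eP eS h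
  | FOr g h => sat eP eS g \/ sat eP eS h
  | FImp g h => sat eP eS g -> sat eP eS h
  | FExP g => exists c : C, sat (scons c eP) eS g
  | FAllP g => forall c : C, sat (scons c eP) eS g
  | FExS g => exists s : S, sat eP (scons s eS) g
  | FAllS g => forall s : S, sat eP (scons s eS) g
  end.

(* A relation X on S^(n+1) is (parameter-free) definable in M_1' by a formula
   whose free variables are the S-variables 0..n (variable k standing for the
   (k+1)-st argument); the truth value may not depend on the values of any
   other variables, i.e. no parameters are used. *)
Definition definable_M1' (n : nat) (X : ('I_n.+1 -> S) -> Prop) : Prop :=
  exists phi : formula,
    forall (x : 'I_n.+1 -> S) (eP : nat -> C) (eS : nat -> S),
      (forall i : 'I_n.+1, eS i = x i) ->
      (sat eP eS phi <-> X x).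

(* Main.v *)
Require Import Defs.
From mathcomp Require Import all_boot all_algebra.
From mathcomp Require Import complex Rstruct.
From mathcomp Require Import ring zify.
From Stdlib Require Import FunctionalExtensionality.
Import GRing.Theory.
Local Open Scope ring_scope.

Definition cf n i : C := 'C(n.+1, i)%:R * (-1) ^+ (n - i).
Definition RN1 n (g : nat -> S) := forall k, (k <= n)%N -> (g k).1 = (g 0%N).1 ^+ k.+1.
Definition RN2 n (g : nat -> S) :=
  (g n).2 = \sum_(1 <= i < n.+1) cf n i * (g (n - i)%N).1 * (g i.-1).2.
Definition RN n g := RN1 n g /\ RN2 n g.

Lemma Rrel_RN n (x : 'I_n.+1 -> S) : Rrel x <-> RN n (fun k => x (inord k)).
Proof.
rewrite /Rrel /RN /RN1 /RN2 /cf /=.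
have E : \sum_(1 <= i < n.+1) 'C(n.+1, i)%:R * (-1) ^+ (n - i) * (x (inord (n.+1 - i).-1)).1 * (x (inord i.-1)).2 = \sum_(1 <= i < n.+1) 'C(n.+1, i)%:R * (-1) ^+ (n - i) * (x (inord (n - i))).1 * (x (inord i.-1)).2.
  by apply: eq_bigr => i _; have -> : ((n.+1 - i).-1 = n - i)%N by lia.
rewrite E; split=> -[h1 h2]; split=> //.
- move=> k hk; have := h1 (inord k); rewrite inordK //.
- move=> i; have hi := ltn_ord i; rewrite ltnS in hi.
  by rewrite -h1 // inord_val.
Qed.

Lemma RN_ext n (g g' : nat -> S) : (forall k, (k <= n)%N -> g k = g' k) ->
  RN n g <-> RN n g'.
Proof.
move=> e; rewrite /RN /RN1 /RN2.
have E : \sum_(1 <= i < n.+1) cf n i * (g (n - i)%N).1 * (g i.-1).2 =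
         \sum_(1 <= i < n.+1) cf n i * (g' (n - i)%N).1 * (g' i.-1).2.
  apply: eq_big_nat => i /andP[h1 h2].
  by rewrite !e //; lia.
rewrite E !e //.
split=> -[h1 h2]; split=> // k hk.
- by rewrite -e // h1.
- by rewrite e // h1.
Qed.

Lemma RN_star n (g : nat -> S) (F : C -> C) :
  RN1 n g ->
  (RN2 n (fun k => starS (F (g k).1) (g k)) <->
   (g n).2 + F ((g 0%N).1 ^+ n.+1) =
     \sum_(1 <= i < n.+1) cf n i * (g (n - i)%N).1 * (g i.-1).2 +
     \sum_(1 <= i < n.+1) cf n i * (g 0%N).1 ^+ (n.+1 - i) * F ((g 0%N).1 ^+ i)).
Proof.
move=> h1; rewrite /RN2 /starS /=.
rewrite h1 // -big_split /=.
have E : \sum_(1 <= i < n.+1) cf n i * (g (n - i)%N).1 * ((g i.-1).2 + F (g i.-1).1) =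
  \sum_(1 <= i < n.+1) (cf n i * (g (n - i)%N).1 * (g i.-1).2 +
     cf n i * (g 0%N).1 ^+ (n.+1 - i) * F ((g 0%N).1 ^+ i)).
  apply: eq_big_nat => i /andP[hi1 hi2].
  rewrite (h1 (n - i)%N); last by lia.
  rewrite (h1 i.-1); last by lia.
  have -> : (i.-1.+1 = i)%N by lia.
  have -> : ((n - i).+1 = n.+1 - i)%N by lia.
  by rewrite mulrDr.
by rewrite E.
Qed.

Lemma RN_star_iff n (g : nat -> S) (F : C -> C) : Dn n F ->
  RN n (fun k => starS (F (g k).1) (g k)) <-> RN n g.
Proof.
move=> [_ hD]; rewrite /RN.
have e1 : RN1 n (fun k => starS (F (g k).1) (g k)) <-> RN1 n g by [].
split=> -[h1 h2]; split=> //.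
- move: h2; rewrite (@RN_star n g F h1) -hD /RN2 => h2.
  by apply: (addIr (F ((g 0%N).1 ^+ n.+1))).
- rewrite (@RN_star n g F h1) -hD h2 //.
Qed.

Lemma aut_repr n (sigma : S -> S) : autMnP n sigma ->
  forall x, sigma x = starS ((sigma (x.1, 0)).2) x.
Proof.
move=> [_ [hpi [hadd [hstar _]]]] [a b] /=.
have -> : (a, b) = starS b (a, 0) by rewrite /starS /= add0r.
rewrite hstar /=.
have := hpi (a, 0); rewrite /piS /starS /=.
case: (sigma (a, 0)) => p q /= ->.
by rewrite add0r addrC.
Qed.

Lemma part1 n (sigma : S -> S) : autMnP n sigma ->
  exists! F : C -> C, additiveC F /\ forall x : S, sigma x = starS (F (piS x)) x.
Proof.
move=> hA; exists (fun a => (sigma (a, 0)).2); split.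
  split; last exact: aut_repr hA.
  move=> a b; have [_ [_ [hadd _]]] := hA.
  by have := hadd (a, 0) (b, 0); rewrite /oplusS /= addr0 => ->.
move=> G [_ hG]; apply: functional_extensionality => a.
by rewrite hG /starS /= add0r.
Qed.

Lemma part2 n (sigma : S -> S) (F : C -> C) : autMnP n sigma -> additiveC F ->
  (forall x : S, sigma x = starS (F (piS x)) x) -> Dn n F.
Proof.
move=> hA hF hs; split=> // alpha.
have [_ [_ [_ [_ hR]]]] := hA.
pose x : 'I_n.+1 -> S := fun i => (alpha ^+ i.+1, 0).
pose g : nat -> S := fun k => (alpha ^+ k.+1, 0).
have hg : forall k, (k <= n)%N -> x (inord k) = g k.
  by move=> k hk; rewrite /x /g inordK.
have g1 : RN1 n g by move=> k _; rewrite /g /= expr1.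
have hx : Rrel x.
  rewrite Rrel_RN (@RN_ext n _ _ hg); split=> //.
  by rewrite /RN2 /g /= big1 // => i _; rewrite mulr0.
have := (proj1 (hR x) hx); rewrite Rrel_RN.
rewrite (@RN_ext n _ (fun k => starS (F (g k).1) (g k))); last first.
  by move=> k hk; rewrite hs hg.
move=> [_ h2]; move: h2; rewrite (@RN_star n g F g1) /g /= expr1 add0r big1; last first.
  by move=> i _; rewrite mulr0.
by rewrite add0r.
Qed.

Lemma part3 n (sigma1 sigma2 : S -> S) (F : C -> C) :
  autMnP n sigma1 -> autMnP n sigma2 -> additiveC F ->
  (forall x : S, sigma1 x = starS (F (piS x)) x) ->
  (forall x : S, sigma2 x = starS (F (piS x)) x) -> sigma1 = sigma2.
Proof.
move=> _ _ _ h1 h2; apply: functional_extensionality => x.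
by rewrite h1 h2.
Qed.

Lemma part4 n (F : C -> C) : Dn n F ->
  exists sigma : S -> S, autMnP n sigma /\
    forall x : S, sigma x = starS (F (piS x)) x.
Proof.
move=> hD; exists (fun x => starS (F (piS x)) x); split=> //.
have hadd := proj1 hD.
split; first exists (fun x => starS (- F (piS x)) x).
- by move=> [a b]; rewrite /starS /piS /= addrK.
- by move=> [a b]; rewrite /starS /piS /= addrNK.
split; first by [].
split.
  move=> [a b] [c d]; rewrite /oplusS /starS /piS /= hadd.
  by congr (_, _); ring.
split.
  by move=> e [a b]; rewrite /starS /piS /=; congr (_, _); ring.
move=> x; rewrite !Rrel_RN.
by rewrite (@RN_star_iff n (fun k => x (inord k)) F hD).
Qed.

Lemma alt_sum (n : nat) : (1 <= n)%N ->
  \sum_(0 <= j < n) ('C(n, j)%:R * (-1) ^+ (n - j.+1) : C) = 1.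
Proof.
move=> hn.
have h0 : (-1 + 1 : C) ^+ n = 0 by rewrite addNr expr0n; case: n hn.
rewrite exprDn big_ord_recr /= subnn expr0 expr1n mul1r binn in h0.
have h1 : \sum_(i < n) ((-1) ^+ (n - i) * 1 ^+ i *+ 'C(n, i) : C) = -1.
  by apply/eqP; rewrite -subr_eq0 opprK; apply/eqP.
rewrite big_mkord; transitivity (- \sum_(i < n) ((-1) ^+ (n - i) * 1 ^+ i *+ 'C(n, i) : C)); last by rewrite h1 opprK.
rewrite -sumrN; apply: eq_bigr => i _.
rewrite expr1n mulr1 -mulr_natl.
have hi := ltn_ord i.
have -> : (n - i = (n - i.+1).+1)%N by lia.
by rewrite exprS -mulNrn -mulr_natl; ring.
Qed.

Lemma binsum (n : nat) : (1 <= n)%N ->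
  \sum_(1 <= i < n.+1) ('C(n.+1, i)%:R * (-1) ^+ (n - i) * i%:R : C) = n.+1%:R.
Proof.
move=> hn.
rewrite big_add1 /=.
transitivity (n.+1%:R * \sum_(0 <= j < n) ('C(n, j)%:R * (-1) ^+ (n - j.+1) : C)).
  rewrite mulr_sumr; apply: eq_big_nat => j hj.
  have := mul_bin_diag n.+1 j; rewrite /= => e.
  have -> : ('C(n.+1, j.+1)%:R * (-1) ^+ (n - j.+1) * j.+1%:R : C)
     = ((j.+1 * 'C(n.+1, j.+1))%N%:R * (-1) ^+ (n - j.+1)) by rewrite natrM; ring.
  by rewrite -e natrM mulrA.
by rewrite alt_sum // mulr1.
Qed.

Lemma key n (al b : C) (a : nat -> C) : (1 <= n)%N ->
 (a n - n.+1%:R * al ^+ n * b = \sum_(1 <= i < n.+1) 'C(n.+1, i)%:R * (-1) ^+ (n - i)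
     * al ^+ (n.+1 - i) * (a i.-1 - i.-1.+1%:R * al ^+ i.-1 * b))
 <-> (a n = \sum_(1 <= i < n.+1) cf n i * al ^+ (n - i).+1 * a i.-1).
Proof.
move=> hn.
have E : \sum_(1 <= i < n.+1) 'C(n.+1, i)%:R * (-1) ^+ (n - i)
     * al ^+ (n.+1 - i) * (a i.-1 - i.-1.+1%:R * al ^+ i.-1 * b) =
  \sum_(1 <= i < n.+1) (cf n i * al ^+ (n - i).+1 * a i.-1 -
      ('C(n.+1, i)%:R * (-1) ^+ (n - i) * i%:R) * (al ^+ n * b)).
  apply: eq_big_nat => i /andP[hi1 hi2].
  have -> : (i.-1.+1 = i)%N by lia.
  have -> : (n.+1 - i = (n - i).+1)%N by lia.
  have -> : al ^+ n = al ^+ (n - i).+1 * al ^+ i.-1.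
    by rewrite -exprD; congr (_ ^+ _); lia.
  rewrite /cf; ring.
rewrite E sumrB -mulr_suml binsum // -mulrA.
split=> h.
- by apply: (addIr (- (n.+1%:R * (al ^+ n * b)))).
- by rewrite h.
Qed.

Fixpoint ppow (t : termP) k := match k with 0 => POne | k'.+1 => PMul (ppow t k') t end.
Fixpoint pnat k := match k with 0 => PZero | k'.+1 => PAdd (pnat k') POne end.
Fixpoint spow (u : termS) k := match k with 0 => u | k'.+1 => SOtimes (spow u k') u end.
Fixpoint psum (f : nat -> termP) k :=
  match k with 0 => PZero | k'.+1 => PAdd (psum f k') (f k'.+1) end.
Fixpoint fconj (g : nat -> formula) k :=
  match k with 0 => FEqP PZero PZero | k'.+1 => FAnd (fconj g k') (g k') end.
Fixpoint exPn k g := match k with 0 => g | k'.+1 => FExP (exPn k' g) end.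
Definition app k (f : nat -> C) (e : nat -> C) j :=
  if (j < k)%N then f j else e (j - k)%N.

Lemma evalP_ppow eP eS t k : evalP eP eS (ppow t k) = evalP eP eS t ^+ k.
Proof. by elim: k => [|k IH] //=; rewrite IH exprSr. Qed.

Lemma evalP_pnat eP eS k : evalP eP eS (pnat k) = k%:R.
Proof. by elim: k => [|k IH] //=; rewrite IH natr1. Qed.

Lemma evalS_spow eP eS u k : evalS eP eS (spow u k) =
  ((evalS eP eS u).1 ^+ k.+1, k.+1%:R * (evalS eP eS u).1 ^+ k * (evalS eP eS u).2).
Proof.
elim: k => [|k IH] /=.
  case: (evalS eP eS u) => p q /=.
  by rewrite expr1 expr0 mulr1 mul1r.
rewrite IH /otimesS /=.
set p := (evalS eP eS u).1; set q := (evalS eP eS u).2.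
f_equal; first by rewrite [RHS]exprSr.
rewrite (exprS p k); ring.
Qed.

Lemma evalP_psum eP eS f k :
  evalP eP eS (psum f k) = \sum_(1 <= i < k.+1) evalP eP eS (f i).
Proof.
elim: k => [|k IH] /=; first by rewrite big_geq.
by rewrite IH (big_nat_recr k.+1).
Qed.

Lemma sat_fconj eP eS g k :
  sat eP eS (fconj g k) <-> (forall j, (j < k)%N -> sat eP eS (g j)).
Proof.
elim: k => [|k IH] /=; first by split=> // _ j.
rewrite IH; split.
- move=> [h1 h2] j; rewrite ltnS leq_eqVlt => /orP[/eqP -> //|]; exact: h1.
- move=> h; split; last exact: h.
  by move=> j hj; apply: h; rewrite ltnS ltnW.
Qed.

Lemma app_scons k f c e :
  app k f (scons c e) = app k.+1 (fun j => if (j < k)%N then f j else c) e.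
Proof.
apply: functional_extensionality => j; rewrite /app /scons.
case: (ltnP j k) => hjk.
- by rewrite (ltn_trans hjk (ltnSn k)).
case: (ltnP j k.+1) => hjk1.
- have ejk : j = k by lia.
  rewrite ejk subnn. by [].
- have -> : (j - k = (j - k.+1).+1)%N by lia.
  by [].
Qed.

Lemma sat_exPn eP eS k g :
  sat eP eS (exPn k g) <-> exists f, sat (app k f eP) eS g.
Proof.
elim: k eP => [|k IH] eP /=.
  have E : forall f, app 0 f eP = eP.
    by move=> f; apply: functional_extensionality => j; rewrite /app subn0.
  split; first by move=> h; exists (fun _ => 0); rewrite E.
  by move=> [f]; rewrite E.
split.
- move=> [c /IH [f hf]]; rewrite app_scons in hf; by eexists; exact hf.
- move=> [f hf]; exists (f k); apply/IH; exists f; rewrite app_scons.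
  have -> : app k.+1 (fun j => if (j < k)%N then f j else f k) eP = app k.+1 f eP.
    apply: functional_extensionality => j; rewrite /app.
    case: (ltnP j k) => h1; first by rewrite (ltn_trans h1 (ltnSn k)).
    case: (ltnP j k.+1) => h2 //.
    have ejk : j = k by lia.
    by rewrite ejk.
  exact: hf.
Qed.

Definition alphaT := PPi (SVar 0).
Definition Bform n :=
  FAnd (FEqP (PAdd (PVar n.+1) POne) PZero)
  (FAnd (fconj (fun k => FEqS (SVar k) (SStar (PVar k) (spow (SVar 0) k))) n.+1)
    (FEqP (PVar n) (psum (fun i => PMul (PMul (PMul (pnat 'C(n.+1, i))
        (ppow (PVar n.+1) (n - i))) (ppow alphaT (n.+1 - i))) (PVar i.-1)) n))).
Definition phi n :=
  FAnd (fconj (fun k => FEqP (PPi (SVar k)) (ppow alphaT k.+1)) n.+1)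
       (FExP (exPn n.+1 (Bform n))).

Lemma sat_phi n eP eS : (1 <= n)%N -> sat eP eS (phi n) <-> RN n eS.
Proof.
move=> hn.
have -> : sat eP eS (phi n) <-> (sat eP eS (fconj (fun k => FEqP (PPi (SVar k)) (ppow alphaT k.+1)) n.+1) /\ exists m, sat (scons m eP) eS (exPn n.+1 (Bform n))) by [].
have E1 : sat eP eS (fconj (fun k => FEqP (PPi (SVar k)) (ppow alphaT k.+1)) n.+1)
    <-> RN1 n eS.
  rewrite sat_fconj; split=> h k hk; move: (h k hk);
    rewrite /= evalP_ppow /alphaT /= /piS -exprSr //.
rewrite E1 /RN.
set al := (eS 0%N).1; set b := (eS 0%N).2.
have R2 : RN1 n eS -> (RN2 n eS <->
   (eS n).2 = \sum_(1 <= i < n.+1) cf n i * al ^+ (n - i).+1 * (eS i.-1).2).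
  move=> h1; rewrite /RN2.
  have -> : \sum_(1 <= i < n.+1) cf n i * (eS (n - i)%N).1 * (eS i.-1).2 =
           \sum_(1 <= i < n.+1) cf n i * al ^+ (n - i).+1 * (eS i.-1).2.
    apply: eq_big_nat => i hi; rewrite h1 //; lia.
  by [].
have PS : forall e : nat -> C, e n.+1 = -1 ->
  (forall k, (k <= n)%N -> e k = (eS k).2 - k.+1%:R * al ^+ k * b) ->
  evalP e eS (psum (fun i => PMul (PMul (PMul (pnat 'C(n.+1, i))
        (ppow (PVar n.+1) (n - i))) (ppow alphaT (n.+1 - i))) (PVar i.-1)) n)
  = \sum_(1 <= i < n.+1) 'C(n.+1, i)%:R * (-1) ^+ (n - i)
     * al ^+ (n.+1 - i) * ((eS i.-1).2 - i.-1.+1%:R * al ^+ i.-1 * b).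
  move=> e em ed; rewrite evalP_psum; apply: eq_big_nat => i hi.
  by rewrite /= evalP_pnat !evalP_ppow /= em ed //; lia.
split.
- move=> [h1 [m /(proj1 (sat_exPn _ _ _ _)) [f hB]]]; split=> //.
  set e := app n.+1 f (scons m eP) in hB.
  have em : e n.+1 = m by rewrite /e /app ltnn subnn.
  move: hB => [hm [hc0 heq]].
  have hc := proj1 (sat_fconj e eS (fun k => FEqS (SVar k) (SStar (PVar k) (spow (SVar 0) k))) n.+1) hc0.
  move: hm => /=; rewrite em => hm.
  have hm' : m = -1 by apply: (addIr 1); rewrite hm addNr.
  have hd : forall k, (k <= n)%N -> e k = (eS k).2 - k.+1%:R * al ^+ k * b.
    move=> k hk; have := hc k hk; rewrite /= evalS_spow /starS /= => E.
    rewrite [in RHS]E /=; rewrite -/al -/b; ring.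
  rewrite R2 //.
  move: heq => /=; rewrite (PS e (etrans em hm') hd) hd // => heq.
  by move/(@key n al b (fun k => (eS k).2) hn): heq.
- move=> [h1 h2]; split=> //.
  exists (-1); apply/(proj2 (sat_exPn _ _ _ _)).
  exists (fun k => (eS k).2 - k.+1%:R * al ^+ k * b).
  set e := app n.+1 _ (scons (-1) eP).
  have em : e n.+1 = -1 by rewrite /e /app ltnn subnn.
  have hd : forall k, (k <= n)%N -> e k = (eS k).2 - k.+1%:R * al ^+ k * b.
    by move=> k hk; rewrite /e /app ltnS hk.
  split; first by rewrite /= em addNr.
  split.
    apply: (proj2 (sat_fconj e eS (fun k => FEqS (SVar k) (SStar (PVar k) (spow (SVar 0) k))) n.+1)) => k hk /=; rewrite evalS_spow /starS /= hd //.
    rewrite -/al -/b -(h1 k hk).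
    by case: (eS k) => p q /=; f_equal; ring.
  rewrite /= (PS e em hd) hd //.
  by apply/(@key n al b (fun k => (eS k).2) hn); rewrite -R2.
Qed.

Theorem mainTheorem10 (n : nat) (hn : (1 <= n)%N) :
  (forall sigma : S -> S, autMnP n sigma ->
     exists! F : C -> C, additiveC F /\ forall x : S, sigma x = starS (F (piS x)) x)
  /\ (forall (sigma : S -> S) (F : C -> C), autMnP n sigma -> additiveC F ->
        (forall x : S, sigma x = starS (F (piS x)) x) -> Dn n F)
  /\ (forall (sigma1 sigma2 : S -> S) (F : C -> C),
        autMnP n sigma1 -> autMnP n sigma2 -> additiveC F ->
        (forall x : S, sigma1 x = starS (F (piS x)) x) ->
        (forall x : S, sigma2 x = starS (F (piS x)) x) ->
        sigma1 = sigma2)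
  /\ (forall F : C -> C, Dn n F ->
        exists sigma : S -> S, autMnP n sigma /\
          forall x : S, sigma x = starS (F (piS x)) x)
  /\ definable_M1' (@Rrel n).
Proof.
split; first exact: part1.
split; first exact: part2.
split; first exact: part3.
split; first exact: part4.
exists (phi n) => x eP eS hx.
rewrite sat_phi // Rrel_RN.
apply: RN_ext => k hk.
by rewrite -(hx (inord k)) inordK.
Qed.
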